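(* Let $0<\mu<L_{\max}^{-1}$ with $L_{\max}=\max_i\|A_i\|_2^2$, and let $\{x^n\}$ be generated by GAITA (as in the context) from any $x^0\in\mathbf{R}^N$. Then for all $n\in\mathbf{N}$, $$T_\lambda(x^n)-T_\lambda(x^{n+1})\geq\frac12\Big(\frac1\mu-L_{\max}\Big)\|x^n-x^{n+1}\|_2^2.$$
   Context: Let $A\in\mathbf{R}^{m\times N}$ have columns $A_1,\dots,A_N$, $y\in\mathbf{R}^m$, $\lambda>0$, $q\in(0,1)$, and $T_\lambda(x)=\frac12\|Ax-y\|_2^2+\lambda\sum_{i=1}^N|x_i|^q$. For a step size $\mu>0$ set $\tau_{\mu,q}=\frac{2-q}{2-2q}(2\lambda\mu(1-q))^{\frac{1}{2-q}}$ and $\eta_{\mu,q}=(2\lambda\mu(1-q))^{\frac{1}{2-q}}$. For $z\in\mathbf{R}$ let $prox_{\mu,\lambda|\cdot|^q}(z)=\arg\min_{v\in\mathbf{R}}\{\frac{(z-v)^2}{2\mu}+\lambda|v|^q\}$ (a single point when $|z|\neq\tau_{\mu,q}$). Define $\mathcal{T}(z,w)$ as the unique element of $prox_{\mu,\lambda|\cdot|^q}(z)$ if $|z|\neq\tau_{\mu,q}$, and, if $|z|=\tau_{\mu,q}$, as $sgn(z)\eta_{\mu,q}$ when $w\neq0$ and $0$ when $w=0$ ($sgn(0)=0$). GAITA: given $x^0\in\mathbf{R}^N$, for $n=0,1,2,\dots$ let $i=(n\bmod N)+1$, $z_i^n=x_i^n-\mu A_i^T(Ax^n-y)$, $x_i^{n+1}=\mathcal{T}(z_i^n,x_i^n)$,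 $x_j^{n+1}=x_j^n$ for $j\neq i$. *)

(* Defs.v *)
From mathcomp Require Import all_boot all_order all_algebra.
From mathcomp Require Import all_classical all_reals all_analysis.
Set Implicit Arguments. Unset Strict Implicit. Unset Printing Implicit Defensive.
Import Order.TTheory GRing.Theory Num.Theory.
Local Open Scope ring_scope.
Local Open Scope classical_set_scope.

Section GAITA.
Variables (R : realType) (m N : nat).
Implicit Types (A : 'M[R]_(m, N)) (y : 'cV[R]_m) (x : 'cV[R]_N).

Definition sqnorm k (v : 'cV[R]_k) : R := \sum_(i < k) (v i 0) ^+ 2.

Definition colnorm2 A (i : 'I_N) : R := \sum_(k < m) (A k i) ^+ 2.
Definition Lmax A : R := \big[Num.max/0]_(i < N) colnorm2 A i.

Definition Tlam A y (lam q : R) x : R :=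
  2^-1 * sqnorm (A *m x - y) + lam * \sum_(i < N) (`|x i 0| `^ q).

Definition proxset (mu lam q z : R) : set R :=
  [set v | forall w : R,
     (z - v) ^+ 2 / (2 * mu) + lam * (`|v| `^ q)
     <= (z - w) ^+ 2 / (2 * mu) + lam * (`|w| `^ q)].

Definition tau (mu lam q : R) : R :=
  (2 - q) / (2 - 2 * q) * ((2 * lam * mu * (1 - q)) `^ (1 / (2 - q))).
Definition eta (mu lam q : R) : R :=
  (2 * lam * mu * (1 - q)) `^ (1 / (2 - q)).

Definition Tmap (mu lam q z w : R) : R :=
  if `|z| != tau mu lam q then xget 0 (proxset mu lam q z)
  else if w != 0 then Num.sg z * eta mu lam q else 0.

(* one GAITA step at iteration n: coordinate i = n mod N (0-based) *)
Definition gaita_step A y (mu lam q : R) (n : nat) x : 'cV[R]_N :=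
  \col_(j < N)
    if (j : nat) == (n %% N)%N then
      Tmap mu lam q (x j 0 - mu * ((A^T *m (A *m x - y)) j 0)) (x j 0)
    else x j 0.

Fixpoint gaita A y (mu lam q : R) (x0 : 'cV[R]_N) (n : nat) : 'cV[R]_N :=
  match n with
  | O => x0
  | S n' => gaita_step A y mu lam q n' (gaita A y mu lam q x0 n')
  end.

End GAITA.

(* Main.v *)
Require Import Defs.
From mathcomp Require Import all_boot all_order all_algebra.
From mathcomp Require Import all_classical all_reals all_analysis.
From mathcomp Require Import ring lra.
Import Order.TTheory GRing.Theory Num.Theory.
Import numFieldNormedType.Exports.
Local Open Scope ring_scope.
Local Open Scope classical_set_scope.

Lemma cont_pow (R : realType) (q : R) : 0 < q -> continuous (fun v : R => `|v| `^ q).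
Proof.
move=> q0 v; have [->|v0] := eqVneq v 0.
  apply/cvgrPdist_lt => e e0; rewrite normr0 powR0 ?gt_eqF //.
  have d0 : 0 < e `^ q^-1 by rewrite powR_gt0.
  near=> t. rewrite sub0r normrN ger0_norm ?powR_ge0 //.
  have -> : e = (e `^ q^-1) `^ q by rewrite -powRrM mulVf ?gt_eqF // powRr1 // ltW.
  apply: gt0_ltr_powR => //; rewrite ?nnegrE ?normr_ge0 ?ltW //.
have h : {for `|v|, continuous (fun a : R => a `^ q)}.
  apply: (@differentiable_continuous _ R^o R^o). apply/derivable1_diffP.
  apply: derivable_powR. by rewrite in_itv /= andbT normr_gt0.
apply: (@continuous_comp _ _ _ (fun x : R => `|x|) (fun a : R => a `^ q)) => //. exact: norm_continuous.
Unshelve. all: by end_near.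
Qed.

Lemma cont_obj (R : realType) (mu lam q z : R) : 0 < q ->
  continuous (fun v : R => (z - v) ^+ 2 / (2 * mu) + lam * (`|v| `^ q)).
Proof.
move=> q0 x.
apply: cvgD.
  apply: cvgMl. rewrite expr2. apply: cvgM; apply: cvgB. all: try exact: cvg_cst. all: try exact: cvg_id.
apply: cvgMr. exact: cont_pow.
Qed.

Lemma prox_ex (R : realType) (mu lam q z : R) : 0 < mu -> 0 < lam -> 0 < q ->
  exists v, proxset mu lam q z v.
Proof.
move=> mu0 lam0 q0.
set f := fun v : R => (z - v) ^+ 2 / (2 * mu) + lam * (`|v| `^ q).
have hb : - (2 * `|z|) <= 2 * `|z| by have := normr_ge0 z; lra.
have [c cin cmin] := EVT_min hb (continuous_subspaceT (@cont_obj R mu lam q z q0)).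
exists c; rewrite /proxset /= => w.
have [win|wout] := boolP (w \in `[- (2 * `|z|), 2 * `|z|]%R); first exact: (cmin w win).
have h0 : (0:R) \in `[- (2 * `|z|), 2 * `|z|]%R.
  by rewrite in_itv /=; apply/andP; split; have := normr_ge0 z; lra.
apply: le_trans (cmin 0 h0) _.
rewrite /f subr0 normr0 powR0 ?gt_eqF // mulr0 addr0.
have hpow : 0 <= lam * `|w| `^ q by rewrite mulr_ge0 ?powR_ge0 // ltW.
have : z ^+ 2 <= (z - w) ^+ 2.
  move: wout; rewrite in_itv /= negb_and -!ltNge.
  have := ler_norm z; have := ler_norm (-z); rewrite normrN => h1 h2.
  move=> /orP[] hw; nra.
move=> hz. have imu : 0 < (2 * mu)^-1 by rewrite invr_gt0 mulr_gt0.
have : z ^+ 2 / (2 * mu) <= (z - w) ^+ 2 / (2 * mu) by rewrite ler_pM2r.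
lra.
Qed.

Lemma key_t (R : realType) (q t : R) : 0 < q -> q < 1 -> 0 < t ->
  t * (2 - q - (1 - q) * t) <= t `^ q.
Proof.
move=> q0 q1 t0.
rewrite -(mulr_powRB1 (ltW t0) q0) ler_pM2l //.
rewrite /powR gt_eqF //.
have h1 := expR_ge1Dx ((q - 1) * ln t).
have h2 : ln t <= t - 1.
  have := @le_ln1Dx R (t - 1); rewrite addrCA subrr addr0; apply; lra.
have : (1 - q) * ln t <= (1 - q) * (t - 1) by rewrite ler_pM2l // subr_gt0.
lra.
Qed.

Lemma tie_core (R : realType) (mu lam q u : R) : 0 < mu -> 0 < lam -> 0 < q -> q < 1 ->
  (tau mu lam q - eta mu lam q) ^+ 2 / (2 * mu) + lam * (eta mu lam q `^ q)
  <= (tau mu lam q - u) ^+ 2 / (2 * mu) + lam * (`|u| `^ q).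
Proof.
move=> mu0 lam0 q0 q1.
have a0 : 0 < 1 - q by rewrite subr_gt0.
set k := 2 * lam * mu * (1 - q).
have k0 : 0 < k by rewrite /k !mulr_gt0.
set e := eta mu lam q.
have e0 : 0 < e by rewrite /e /eta powR_gt0.
have ek : e `^ (2 - q) = k.
  have h2q : 2 - q != 0 by apply/eqP; lra.
  rewrite /e /eta -/k -powRrM mul1r mulVf // powRr1 //; exact: ltW.
have F2 : e `^ q * k = e ^+ 2.
  rewrite -ek -powRD; last by rewrite (gt_eqF e0) implybT.
  by rewrite addrCA subrr addr0 -powR_mulrn ?ltW.
have Htau : tau mu lam q * (2 - 2 * q) = (2 - q) * e.
  rewrite /tau /e /eta; field; apply/eqP; lra.
set T := tau mu lam q.
set P := 2 * mu * lam.
have PK : P * (1 - q) = k by rewrite /P /k; ring.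
have eq0q : e `^ q > 0 by rewrite powR_gt0.
suff : (T - e) ^+ 2 + P * e `^ q <= (T - u) ^+ 2 + P * `|u| `^ q.
  move=> h. have m2 : 0 < 2 * mu by rewrite mulr_gt0.
  have E1 : forall x, lam * x = P * x / (2 * mu).
    by move=> x; rewrite /P; field; apply/eqP; lra.
  by rewrite (E1 (e `^ q)) (E1 (`|u| `^ q)) -!mulrDl ler_pM2r ?invr_gt0.
have L : (T - e) ^+ 2 + P * e `^ q = T ^+ 2.
  have : (1 - q) * ((T - e) ^+ 2 + P * e `^ q - T ^+ 2) = 0.
    have -> : (1 - q) * ((T - e) ^+ 2 + P * e `^ q - T ^+ 2)
      = (1 - q) * e ^+ 2 - e * (T * (2 - 2 * q)) + e `^ q * (P * (1 - q)) by ring.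
    rewrite Htau PK F2; ring.
  by move/eqP; rewrite mulf_eq0 (gt_eqF a0) /= subr_eq0 => /eqP.
rewrite L.
have T0 : 0 < T.
  have : 0 < T * (2 - 2 * q) by rewrite Htau mulr_gt0 //; lra.
  rewrite pmulr_lgt0 //; lra.
have [u0|u0] := leP u 0.
  have P0 : 0 <= P by rewrite /P; apply/ltW; rewrite !mulr_gt0.
  have : 0 <= P * `|u| `^ q by rewrite mulr_ge0 ?powR_ge0.
  nra.
rewrite gtr0_norm //.
set t := u / e.
have ut : u = e * t by rewrite /t mulrCA mulfV ?gt_eqF ?mulr1.
have t0 : 0 < t by rewrite /t divr_gt0.
have kt := @key_t R q t q0 q1 t0.
have upow : u `^ q = e `^ q * t `^ q by rewrite ut powRM // ltW.
rewrite upow.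
suff : 0 <= (1 - q) * (u ^+ 2 - 2 * T * u + P * (e `^ q * t `^ q)).
  rewrite pmulr_rge0 //; nra.
have -> : (1 - q) * (u ^+ 2 - 2 * T * u + P * (e `^ q * t `^ q))
   = (1 - q) * u ^+ 2 - u * (T * (2 - 2 * q)) + (e `^ q * (P * (1 - q))) * t `^ q by ring.
rewrite Htau PK F2 ut.
have e2 : 0 < e ^+ 2 by rewrite exprn_gt0.
have : e ^+ 2 * (t * (2 - q - (1 - q) * t)) <= e ^+ 2 * t `^ q by rewrite ler_pM2l.
nra.
Qed.

Lemma tau_gt0 (R : realType) (mu lam q : R) : 0 < mu -> 0 < lam -> 0 < q -> q < 1 ->
  0 < tau mu lam q.
Proof.
move=> mu0 lam0 q0 q1; rewrite /tau mulr_gt0 ?powR_gt0 //.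
  rewrite divr_gt0 //; lra.
rewrite !mulr_gt0 //; lra.
Qed.

Lemma tie_min (R : realType) (mu lam q z : R) : 0 < mu -> 0 < lam -> 0 < q -> q < 1 ->
  `|z| = tau mu lam q -> proxset mu lam q z (Num.sg z * eta mu lam q).
Proof.
move=> mu0 lam0 q0 q1 hz w.
have t0 := @tau_gt0 R mu lam q mu0 lam0 q0 q1.
have e0 : 0 < eta mu lam q by rewrite /eta powR_gt0 // !mulr_gt0 //; lra.
have [zn|zp|z0] := ltgtP z 0; last by move: hz; rewrite z0 normr0 => h; move: t0; rewrite -h ltxx.
- rewrite ltr0_sg // mulN1r normrN gtr0_norm //.
  move: hz; rewrite ltr0_norm // => hz.
  have := @tie_core R mu lam q (- w) mu0 lam0 q0 q1.
  rewrite normrN -hz.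
  have -> : (- z - eta mu lam q) ^+ 2 = (z - - eta mu lam q) ^+ 2 by ring.
  by have -> : (- z - - w) ^+ 2 = (z - w) ^+ 2 by ring.
- rewrite gtr0_sg // mul1r gtr0_norm //.
  move: hz; rewrite gtr0_norm // => hz.
  by have := @tie_core R mu lam q w mu0 lam0 q0 q1; rewrite -hz.
Qed.

Lemma Tmap_ok (R : realType) (mu lam q z w : R) : 0 < mu -> 0 < lam -> 0 < q -> q < 1 ->
  (z - Tmap mu lam q z w) ^+ 2 / (2 * mu) + lam * (`|Tmap mu lam q z w| `^ q)
  <= (z - w) ^+ 2 / (2 * mu) + lam * (`|w| `^ q).
Proof.
move=> mu0 lam0 q0 q1; rewrite /Tmap.
case: ifPn => hz.
  exact: (xgetPex 0 (@prox_ex R mu lam q z mu0 lam0 q0)).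
move: hz; rewrite negbK => /eqP hz.
case: ifPn => hw; first exact: (@tie_min R mu lam q z mu0 lam0 q0 q1 hz).
by move: hw; rewrite negbK => /eqP ->.
Qed.

Lemma le_bigmax_s (R : realType) (I : eqType) (F : I -> R) (s : seq I) i :
  i \in s -> F i <= \big[Num.max/0]_(j <- s) F j.
Proof.
elim: s => // a s IH; rewrite inE big_cons => /orP[/eqP->|/IH h].
  by rewrite le_max lexx.
by rewrite le_max h orbT.
Qed.

Lemma step_dec (R : realType) (m N : nat) (A : 'M[R]_(m, N)) (y : 'cV[R]_m)
  (lam q mu : R) (x : 'cV[R]_N) (n : nat) :
  0 < lam -> 0 < q -> q < 1 -> 0 < mu ->
  Tlam A y lam q x - Tlam A y lam q (gaita_step A y mu lam q n x)
    >= 2^-1 * (mu^-1 - Lmax A) * sqnorm (x - gaita_step A y mu lam q n x).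
Proof.
move=> lam0 q0 q1 mu0.
case: (posnP N) => [N0|Npos].
  have -> : gaita_step A y mu lam q n x = x.
    by apply/matrixP => j; move: (ltn_ord j); rewrite {2}N0.
  by rewrite !subrr /sqnorm big1 ?mulr0 // => j; move: (ltn_ord j); rewrite {2}N0.
set i : 'I_N := Ordinal (ltn_pmod n Npos).
set r := A *m x - y.
set g := (A^T *m r) i 0.
set z := x i 0 - mu * g.
set v := Tmap mu lam q z (x i 0).
set d := v - x i 0.
have xE : forall j, gaita_step A y mu lam q n x j 0 = if j == i then v else x j 0.
  move=> j; rewrite /gaita_step mxE.
  have [->|hj] := eqVneq j i; first by rewrite /= eqxx.
  have hj' : (j : nat) != (n %% N)%N by exact: hj.
  by rewrite (negbTE hj').
set x' := gaita_step A y mu lam q n x in xE *.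
clearbody x'.
have hsq : sqnorm (x - x') = d ^+ 2.
  rewrite /sqnorm (bigD1 i) //= big1 ?addr0.
    by rewrite !mxE xE eqxx /d; ring.
  by move=> j hj; rewrite !mxE xE (negbTE hj) subrr expr0n.
have hpen : \sum_(j < N) `|x' j 0| `^ q = \sum_(j < N) `|x j 0| `^ q - `|x i 0| `^ q + `|v| `^ q.
  rewrite (bigD1 i) //= [in RHS](bigD1 i) //= xE eqxx.
  rewrite (eq_bigr (fun j => `|x j 0| `^ q)); last by move=> j /negbTE hj; rewrite xE hj.
  ring.
have hA : forall k, (A *m x' - y) k 0 = r k 0 + A k i * d.
  move=> k; rewrite /r !mxE (bigD1 i) //= [in RHS](bigD1 i) //= xE eqxx.
  rewrite (eq_bigr (fun j => A k j * x j 0)); last by move=> j /negbTE hj; rewrite xE hj.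
  rewrite /d; ring.
have hg : g = \sum_(k < m) A k i * r k 0.
  by rewrite /g mxE; apply: eq_bigr => k _; rewrite mxE.
have hS : sqnorm (A *m x' - y) = sqnorm r + 2 * d * g + d ^+ 2 * colnorm2 A i.
  rewrite /sqnorm /colnorm2 hg !mulr_sumr -!big_split /=.
  by apply: eq_bigr => k _; rewrite hA; ring.
have hL : colnorm2 A i <= Lmax A by apply: le_bigmax_s; exact: mem_index_enum.
have hT := @Tmap_ok R mu lam q z (x i 0) mu0 lam0 q0 q1.
rewrite -/v in hT.
have E : (z - v) ^+ 2 / (2 * mu) - (z - x i 0) ^+ 2 / (2 * mu) = g * d + d ^+ 2 * mu^-1 / 2.
  rewrite /z /d; field; apply/eqP; lra.
rewrite /Tlam hS hpen hsq.
have hd2 : 0 <= d ^+ 2 by exact: sqr_ge0.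
have : colnorm2 A i * d ^+ 2 <= Lmax A * d ^+ 2 by rewrite ler_wpM2r.
lra.
Qed.

Theorem mainTheorem8 (R : realType) (m N : nat) (A : 'M[R]_(m, N)) (y : 'cV[R]_m)
  (lam q mu : R) (x0 : 'cV[R]_N) :
  0 < lam -> 0 < q -> q < 1 -> 0 < mu -> mu * Lmax A < 1 ->
  forall n : nat,
    Tlam A y lam q (gaita A y mu lam q x0 n) - Tlam A y lam q (gaita A y mu lam q x0 n.+1)
    >= 2^-1 * (mu^-1 - Lmax A) * sqnorm (gaita A y mu lam q x0 n - gaita A y mu lam q x0 n.+1).
Proof.
move=> lam0 q0 q1 mu0 _ n.
exact: (@step_dec R m N A y lam q mu (gaita A y mu lam q x0 n) n lam0 q0 q1 mu0).
Qed.
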